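(* Let $\gamma_1,\gamma_2\in\Psi^+$ be orthogonal roots such that $\{\gamma_1,\gamma_2\}$ is contained in some admissible subset of $\Psi^+$. Then $e_{\gamma_1}e_{\gamma_2}=e_{\gamma_2}e_{\gamma_1}$ in $\mathrm{Br}(\mathrm{F}_4)$.
   Context: $\mathrm{Br}(\mathrm{F}_4)$ is the unital associative $\mathbb Z[\delta^{\pm1}]$-algebra ($\delta$ an indeterminate) generated by $r_1,\dots,r_4,e_1,\dots,e_4$ subject to: $r_i^2=1$, $r_ie_i=e_ir_i=e_i$ for all $i$; $e_i^2=\delta e_i$ for $i\in\{3,4\}$; $e_i^2=\delta^2e_i$ for $i\in\{1,2\}$; for $\{i,j\}\in\{\{1,3\},\{1,4\},\{2,4\}\}$: $r_ir_j=r_jr_i$, $e_ir_j=r_je_i$, $e_ie_j=e_je_i$; for $(i,j)\in\{(1,2),(2,1),(3,4),(4,3)\}$: $r_ir_jr_i=r_jr_ir_j$, $r_jr_ie_j=e_ie_j$, $r_ie_jr_i=r_je_ir_j$; and $r_2r_3r_2r_3=r_3r_2r_3r_2$, $r_2r_3e_2=r_3e_2$, $r_2e_3r_2e_3=e_3e_2e_3$, $(r_2r_3r_2)e_3=e_3(r_2r_3r_2)$, $e_2r_3e_2=\delta e_2$, $e_2e_3e_2=\delta e_2$, $e_2r_3r_2=e_2r_3$, $e_2e_3r_2=e_2e_3$. Roots: $\epsilon_1,\dots,\epsilon_4$ standard basis of $\mathbb R^4$; $\beta_1=\frac12(\epsilon_1-\epsilon_2-\epsilon_3-\epsilon_4)$,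 $\beta_2=\epsilon_2$, $\beta_3=\epsilon_3-\epsilon_2$, $\beta_4=\epsilon_4-\epsilon_3$; $\Psi=\{\pm\epsilon_i\}\cup\{\pm\epsilon_i\pm\epsilon_j:i<j\}\cup\{\frac12(\pm\epsilon_1\pm\epsilon_2\pm\epsilon_3\pm\epsilon_4)\}$ with positive roots $\Psi^+$ = roots that are nonnegative combinations of the $\beta_i$; a root and its negative are identified when naming positive roots. $W=W(\mathrm{F}_4)$ is generated by $s_i=s_{\beta_i}$, identified with its image in $\mathrm{Br}(\mathrm{F}_4)$ via $s_i\mapsto r_i$; $W$ acts on $\Psi^+$ by $w\cdot\beta=$ the positive one of $\pm w\beta$. For $\beta\in\Psi^+$, $e_\beta:=we_iw^{-1}$ for any $w\in W$, $i\in\{1,\dots,4\}$ with $w\beta_i=\beta$ (this is well defined). Admissible sets: let $\Phi$ be the $\mathrm{E}_6$ root system in a Euclidean space $V$ with simple roots $\alpha_1,\dots,\alpha_6$ of squared length $2$, $(\alpha_i,\alpha_j)=-1$ for $\{i,j\}\in\{\{1,3\},\{3,4\},\{4,5\},\{5,6\},\{2,4\}\}$ and $0$ for other $i\ne j$, positive roots $\Phi^+$. $B\subseteq\Phi^+$ is admissible if its elements are mutually orthogonal and whenever $\gamma_1,\gamma_2,\gamma_3\in B$ are distinct and $\gamma\in\Phi$ has $(\gamma,\gamma_k)\in\{\pm1\}$ ($k=1,2,3$), the positive one of $\pm(2\gamma-\sum_k(\gamma,\gamma_k)\gamma_k)$ lies in $B$. With $\mathfrak p:V\to\mathbb R^4$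 linear, $\mathfrak p(\alpha_1)=\mathfrak p(\alpha_6)=\beta_1$, $\mathfrak p(\alpha_3)=\mathfrak p(\alpha_5)=\beta_2$, $\mathfrak p(\alpha_4)=\beta_3$, $\mathfrak p(\alpha_2)=\beta_4$, a set $X\subseteq\Psi^+$ of mutually orthogonal roots is admissible if $\mathfrak p^{-1}(X)\cap\Phi^+$ is admissible. *)

(* Defs.v *)
From mathcomp Require Import all_boot all_order all_algebra.
Set Implicit Arguments. Unset Strict Implicit. Unset Printing Implicit Defensive.
Import Order.TTheory GRing.Theory Num.Theory.
Local Open Scope ring_scope.

(* The F4 root system Psi in R^4 (all roots have rational coordinates) *)

Record vec4 := V4 { c1 : rat; c2 : rat; c3 : rat; c4 : rat }.

Definition add4 (u v : vec4) : vec4 :=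
  V4 (c1 u + c1 v) (c2 u + c2 v) (c3 u + c3 v) (c4 u + c4 v).
Definition scale4 (a : rat) (v : vec4) : vec4 :=
  V4 (a * c1 v) (a * c2 v) (a * c3 v) (a * c4 v).
Definition opp4 (v : vec4) : vec4 := scale4 (-1) v.
Definition zero4 : vec4 := V4 0 0 0 0.
Definition dot4 (u v : vec4) : rat :=
  c1 u * c1 v + c2 u * c2 v + c3 u * c3 v + c4 u * c4 v.

(* standard basis epsilon_1..epsilon_4 (indexed by 'I_4 = {0,..,3}) *)
Definition eps (i : 'I_4) : vec4 :=
  V4 (i == 0 :> nat)%:R (i == 1 :> nat)%:R (i == 2 :> nat)%:R (i == 3 :> nat)%:R.

Definition sign (s : rat) : Prop := s = 1 \/ s = -1.

Definition rootF4 (v : vec4) : Prop :=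
  (exists (i : 'I_4) s, sign s /\ v = scale4 s (eps i)) \/
  (exists (i j : 'I_4) s t, (i < j)%N /\ sign s /\ sign t /\
      v = add4 (scale4 s (eps i)) (scale4 t (eps j))) \/
  (exists s1 s2 s3 s4, sign s1 /\ sign s2 /\ sign s3 /\ sign s4 /\
      v = V4 (s1 / 2%:R) (s2 / 2%:R) (s3 / 2%:R) (s4 / 2%:R)).

(* simple roots beta_1..beta_4 (indices 1..4; other indices give 0) *)
Definition beta (i : nat) : vec4 :=
  match i with
  | 1 => V4 (1 / 2%:R) (- (1 / 2%:R)) (- (1 / 2%:R)) (- (1 / 2%:R))
  | 2 => V4 0 1 0 0
  | 3 => V4 0 (-1) 1 0
  | 4 => V4 0 0 (-1) 1
  | _ => zero4
  end%N.

Definition posRootF4 (v : vec4) : Prop :=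
  rootF4 v /\
  exists a1 a2 a3 a4 : rat, 0 <= a1 /\ 0 <= a2 /\ 0 <= a3 /\ 0 <= a4 /\
    v = add4 (add4 (scale4 a1 (beta 1)) (scale4 a2 (beta 2)))
             (add4 (scale4 a3 (beta 3)) (scale4 a4 (beta 4))).

Definition refl4 (b v : vec4) : vec4 :=
  add4 v (scale4 (- (2%:R * dot4 v b / dot4 b b)) b).

Definition valid_word (w : seq nat) : bool := all (fun i => (1 <= i <= 4)%N) w.

(* action of w = s_{i1} ... s_{ik} (word [:: i1; ...; ik]) on R^4 *)
Definition actW (w : seq nat) (v : vec4) : vec4 :=
  foldr (fun i x => refl4 (beta i) x) v w.

(* The E6 root system Phi, in coordinates w.r.t. alpha_1..alpha_6      *)

Record vec6 := V6 { d1 : int; d2 : int; d3 : int; d4 : int; d5 : int; d6 : int }.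

Definition add6 (u v : vec6) : vec6 :=
  V6 (d1 u + d1 v) (d2 u + d2 v) (d3 u + d3 v) (d4 u + d4 v) (d5 u + d5 v) (d6 u + d6 v).
Definition scale6 (a : int) (v : vec6) : vec6 :=
  V6 (a * d1 v) (a * d2 v) (a * d3 v) (a * d4 v) (a * d5 v) (a * d6 v).
Definition opp6 (v : vec6) : vec6 := scale6 (-1) v.

(* bilinear form: (alpha_i,alpha_i)=2, (alpha_i,alpha_j)=-1 for
   {i,j} in {{1,3},{3,4},{4,5},{5,6},{2,4}}, 0 otherwise *)
Definition dot6 (u v : vec6) : int :=
  2%:Z * (d1 u * d1 v + d2 u * d2 v + d3 u * d3 v + d4 u * d4 v + d5 u * d5 v + d6 u * d6 v)
  - (d1 u * d3 v + d3 u * d1 v) - (d3 u * d4 v + d4 u * d3 v)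
  - (d4 u * d5 v + d5 u * d4 v) - (d5 u * d6 v + d6 u * d5 v)
  - (d2 u * d4 v + d4 u * d2 v).

Definition alpha (i : nat) : vec6 :=
  match i with
  | 1 => V6 1 0 0 0 0 0
  | 2 => V6 0 1 0 0 0 0
  | 3 => V6 0 0 1 0 0 0
  | 4 => V6 0 0 0 1 0 0
  | 5 => V6 0 0 0 0 1 0
  | 6 => V6 0 0 0 0 0 1
  | _ => V6 0 0 0 0 0 0
  end%N.

Definition refl6 (b v : vec6) : vec6 := add6 v (scale6 (- dot6 v b) b).

Inductive rootE6 : vec6 -> Prop :=
  | rootE6_simple i : (1 <= i <= 6)%N -> rootE6 (alpha i)
  | rootE6_refl i v : (1 <= i <= 6)%N -> rootE6 v -> rootE6 (refl6 (alpha i) v).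

Definition posRootE6 (v : vec6) : Prop :=
  rootE6 v /\ 0 <= d1 v /\ 0 <= d2 v /\ 0 <= d3 v /\ 0 <= d4 v /\ 0 <= d5 v /\ 0 <= d6 v.

Definition pm1 (z : int) : Prop := z = 1 \/ z = -1.

Definition admissibleE6 (B : vec6 -> Prop) : Prop :=
  (forall x, B x -> posRootE6 x) /\
  (forall x y, B x -> B y -> x <> y -> dot6 x y = 0) /\
  (forall g1 g2 g3 g, B g1 -> B g2 -> B g3 ->
     g1 <> g2 -> g1 <> g3 -> g2 <> g3 -> rootE6 g ->
     pm1 (dot6 g g1) -> pm1 (dot6 g g2) -> pm1 (dot6 g g3) ->
     let v := add6 (scale6 2%:Z g)
                (opp6 (add6 (scale6 (dot6 g g1) g1)
                      (add6 (scale6 (dot6 g g2) g2) (scale6 (dot6 g g3) g3)))) in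
     forall d, (d = v \/ d = opp6 v) -> posRootE6 d -> B d).

Definition projE6F4 (v : vec6) : vec4 :=
  add4 (add4 (scale4 (d1 v + d6 v)%:~R (beta 1)) (scale4 (d3 v + d5 v)%:~R (beta 2)))
       (add4 (scale4 (d4 v)%:~R (beta 3)) (scale4 (d2 v)%:~R (beta 4))).

Definition admissibleF4 (X : vec4 -> Prop) : Prop :=
  (forall x, X x -> posRootF4 x) /\
  (forall x y, X x -> X y -> x <> y -> dot4 x y = 0) /\
  admissibleE6 (fun v => posRootE6 v /\ X (projE6F4 v)).

Definition BrF4_rels (R : pzRingType) (delta : R) (r e : nat -> R) : Prop :=
  (forall i, (1 <= i <= 4)%N ->
     r i * r i = 1 /\ r i * e i = e i /\ e i * r i = e i) /\
  e 3%N * e 3%N = delta * e 3%N /\ e 4%N * e 4%N = delta * e 4%N /\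
  e 1%N * e 1%N = delta ^+ 2 * e 1%N /\ e 2%N * e 2%N = delta ^+ 2 * e 2%N /\
  (forall i j, (i, j) \in [:: (1, 3); (3, 1); (1, 4); (4, 1); (2, 4); (4, 2)]%N ->
     r i * r j = r j * r i /\ e i * r j = r j * e i /\ e i * e j = e j * e i) /\
  (forall i j, (i, j) \in [:: (1, 2); (2, 1); (3, 4); (4, 3)]%N ->
     r i * r j * r i = r j * r i * r j /\
     r j * r i * e j = e i * e j /\
     r i * e j * r i = r j * e i * r j) /\
  r 2%N * r 3%N * r 2%N * r 3%N = r 3%N * r 2%N * r 3%N * r 2%N /\
  r 2%N * r 3%N * e 2%N = r 3%N * e 2%N /\
  r 2%N * e 3%N * r 2%N * e 3%N = e 3%N * e 2%N * e 3%N /\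
  (r 2%N * r 3%N * r 2%N) * e 3%N = e 3%N * (r 2%N * r 3%N * r 2%N) /\
  e 2%N * r 3%N * e 2%N = delta * e 2%N /\
  e 2%N * e 3%N * e 2%N = delta * e 2%N /\
  e 2%N * r 3%N * r 2%N = e 2%N * r 3%N /\
  e 2%N * e 3%N * r 2%N = e 2%N * e 3%N.

Definition wordR (R : pzRingType) (r : nat -> R) (w : seq nat) : R :=
  \prod_(i <- w) r i.

(* e_beta := w e_i w^{-1} where w beta_i = beta *)
Definition eRoot (R : pzRingType) (r e : nat -> R) (w : seq nat) (i : nat) : R :=
  wordR r w * e i * wordR r (rev w).

(* Main.v *)
Require Import Defs.
From mathcomp Require Import all_boot all_order all_algebra.
From mathcomp Require Import lra.
Import Order.TTheory GRing.Theory Num.Theory.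
Set Implicit Arguments. Unset Strict Implicit. Unset Printing Implicit Defensive.

Definition letter := (bool * nat)%type.
Definition step := (nat * nat * bool)%type.
Definition rules : seq (seq letter * seq letter * nat) := [:: ([:: (true,1); (true,1)], [::], 0%N);
  ([:: (true,1); (false,1)], [:: (false,1)], 0%N);
  ([:: (false,1); (true,1)], [:: (false,1)], 0%N);
  ([:: (true,2); (true,2)], [::], 0%N);
  ([:: (true,2); (false,2)], [:: (false,2)], 0%N);
  ([:: (false,2); (true,2)], [:: (false,2)], 0%N);
  ([:: (true,3); (true,3)], [::], 0%N);
  ([:: (true,3); (false,3)], [:: (false,3)], 0%N);
  ([:: (false,3); (true,3)], [:: (false,3)], 0%N);
  ([:: (true,4); (true,4)], [::], 0%N);
  ([:: (true,4); (false,4)], [:: (false,4)], 0%N);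
  ([:: (false,4); (true,4)], [:: (false,4)], 0%N);
  ([:: (false,3); (false,3)], [:: (false,3)], 1%N);
  ([:: (false,4); (false,4)], [:: (false,4)], 1%N);
  ([:: (false,1); (false,1)], [:: (false,1)], 2%N);
  ([:: (false,2); (false,2)], [:: (false,2)], 2%N);
  ([:: (true,1); (true,3)], [:: (true,3); (true,1)], 0%N);
  ([:: (false,1); (true,3)], [:: (true,3); (false,1)], 0%N);
  ([:: (false,1); (false,3)], [:: (false,3); (false,1)], 0%N);
  ([:: (true,3); (true,1)], [:: (true,1); (true,3)], 0%N);
  ([:: (false,3); (true,1)], [:: (true,1); (false,3)], 0%N);
  ([:: (false,3); (false,1)], [:: (false,1); (false,3)], 0%N);
  ([:: (true,1); (true,4)], [:: (true,4); (true,1)], 0%N);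
  ([:: (false,1); (true,4)], [:: (true,4); (false,1)], 0%N);
  ([:: (false,1); (false,4)], [:: (false,4); (false,1)], 0%N);
  ([:: (true,4); (true,1)], [:: (true,1); (true,4)], 0%N);
  ([:: (false,4); (true,1)], [:: (true,1); (false,4)], 0%N);
  ([:: (false,4); (false,1)], [:: (false,1); (false,4)], 0%N);
  ([:: (true,2); (true,4)], [:: (true,4); (true,2)], 0%N);
  ([:: (false,2); (true,4)], [:: (true,4); (false,2)], 0%N);
  ([:: (false,2); (false,4)], [:: (false,4); (false,2)], 0%N);
  ([:: (true,4); (true,2)], [:: (true,2); (true,4)], 0%N);
  ([:: (false,4); (true,2)], [:: (true,2); (false,4)], 0%N);
  ([:: (false,4); (false,2)], [:: (false,2); (false,4)], 0%N);
  ([:: (true,1); (true,2); (true,1)], [:: (true,2); (true,1); (true,2)], 0%N);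
  ([:: (true,2); (true,1); (false,2)], [:: (false,1); (false,2)], 0%N);
  ([:: (true,1); (false,2); (true,1)], [:: (true,2); (false,1); (true,2)], 0%N);
  ([:: (true,2); (true,1); (true,2)], [:: (true,1); (true,2); (true,1)], 0%N);
  ([:: (true,1); (true,2); (false,1)], [:: (false,2); (false,1)], 0%N);
  ([:: (true,2); (false,1); (true,2)], [:: (true,1); (false,2); (true,1)], 0%N);
  ([:: (true,3); (true,4); (true,3)], [:: (true,4); (true,3); (true,4)], 0%N);
  ([:: (true,4); (true,3); (false,4)], [:: (false,3); (false,4)], 0%N);
  ([:: (true,3); (false,4); (true,3)], [:: (true,4); (false,3); (true,4)], 0%N);
  ([:: (true,4); (true,3); (true,4)], [:: (true,3); (true,4); (true,3)], 0%N);
  ([:: (true,3); (true,4); (false,3)], [:: (false,4); (false,3)], 0%N);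
  ([:: (true,4); (false,3); (true,4)], [:: (true,3); (false,4); (true,3)], 0%N);
  ([:: (true,2); (true,3); (true,2); (true,3)], [:: (true,3); (true,2); (true,3); (true,2)], 0%N);
  ([:: (true,2); (true,3); (false,2)], [:: (true,3); (false,2)], 0%N);
  ([:: (true,2); (false,3); (true,2); (false,3)], [:: (false,3); (false,2); (false,3)], 0%N);
  ([:: (true,2); (true,3); (true,2); (false,3)], [:: (false,3); (true,2); (true,3); (true,2)], 0%N);
  ([:: (false,2); (true,3); (false,2)], [:: (false,2)], 1%N);
  ([:: (false,2); (false,3); (false,2)], [:: (false,2)], 1%N);
  ([:: (false,2); (true,3); (true,2)], [:: (false,2); (true,3)], 0%N);
  ([:: (false,2); (false,3); (true,2)], [:: (false,2); (false,3)], 0%N)].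
Definition NRULES := 54%N.
Definition vecl : seq (int * int * int * int) := [:: ((0)%Z,(0)%Z,(-2)%Z,(2)%Z); ((0)%Z,(-2)%Z,(2)%Z,(0)%Z); ((0)%Z,(2)%Z,(0)%Z,(0)%Z); ((1)%Z,(-1)%Z,(-1)%Z,(-1)%Z); ((0)%Z,(-2)%Z,(0)%Z,(2)%Z); ((0)%Z,(0)%Z,(2)%Z,(0)%Z); ((1)%Z,(1)%Z,(-1)%Z,(-1)%Z); ((0)%Z,(0)%Z,(0)%Z,(2)%Z); ((0)%Z,(2)%Z,(2)%Z,(0)%Z); ((1)%Z,(-1)%Z,(1)%Z,(-1)%Z); ((0)%Z,(2)%Z,(0)%Z,(2)%Z); ((1)%Z,(-1)%Z,(-1)%Z,(1)%Z); ((1)%Z,(1)%Z,(1)%Z,(-1)%Z); ((0)%Z,(0)%Z,(2)%Z,(2)%Z); ((1)%Z,(1)%Z,(-1)%Z,(1)%Z); ((2)%Z,(0)%Z,(0)%Z,(-2)%Z); ((1)%Z,(-1)%Z,(1)%Z,(1)%Z); ((2)%Z,(0)%Z,(-2)%Z,(0)%Z); ((1)%Z,(1)%Z,(1)%Z,(1)%Z); ((2)%Z,(-2)%Z,(0)%Z,(0)%Z); ((2)%Z,(0)%Z,(0)%Z,(0)%Z); ((2)%Z,(2)%Z,(0)%Z,(0)%Z); ((2)%Z,(0)%Z,(2)%Z,(0)%Z); ((2)%Z,(0)%Z,(0)%Z,(2)%Z); ((0)%Z,(0)%Z,(2)%Z,(-2)%Z); ((0)%Z,(2)%Z,(-2)%Z,(0)%Z);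 ((0)%Z,(-2)%Z,(0)%Z,(0)%Z); ((-1)%Z,(1)%Z,(1)%Z,(1)%Z); ((0)%Z,(2)%Z,(0)%Z,(-2)%Z); ((0)%Z,(0)%Z,(-2)%Z,(0)%Z); ((-1)%Z,(-1)%Z,(1)%Z,(1)%Z); ((0)%Z,(0)%Z,(0)%Z,(-2)%Z); ((0)%Z,(-2)%Z,(-2)%Z,(0)%Z); ((-1)%Z,(1)%Z,(-1)%Z,(1)%Z); ((0)%Z,(-2)%Z,(0)%Z,(-2)%Z); ((-1)%Z,(1)%Z,(1)%Z,(-1)%Z); ((-1)%Z,(-1)%Z,(-1)%Z,(1)%Z); ((0)%Z,(0)%Z,(-2)%Z,(-2)%Z); ((-1)%Z,(-1)%Z,(1)%Z,(-1)%Z); ((-2)%Z,(0)%Z,(0)%Z,(2)%Z); ((-1)%Z,(1)%Z,(-1)%Z,(-1)%Z); ((-2)%Z,(0)%Z,(2)%Z,(0)%Z); ((-1)%Z,(-1)%Z,(-1)%Z,(-1)%Z); ((-2)%Z,(2)%Z,(0)%Z,(0)%Z); ((-2)%Z,(0)%Z,(0)%Z,(0)%Z); ((-2)%Z,(-2)%Z,(0)%Z,(0)%Z); ((-2)%Z,(0)%Z,(-2)%Z,(0)%Z); ((-2)%Z,(0)%Z,(0)%Z,(-2)%Z)].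
Definition actl : seq (seq nat) := [:: [:: 0; 0; 0; 0; 0; 0; 0; 0; 0; 0; 0; 0; 0; 0; 0; 0; 0; 0; 0; 0; 0; 0; 0; 0; 0; 0; 0; 0; 0; 0; 0; 0; 0; 0; 0; 0; 0; 0; 0; 0; 0; 0; 0; 0; 0; 0; 0; 0]; [:: 0; 1; 6; 27; 4; 9; 2; 11; 15; 5; 17; 7; 12; 19; 14; 8; 16; 10; 20; 13; 18; 21; 22; 23; 24; 25; 30; 3; 28; 33; 26; 35; 39; 29; 41; 31; 36; 43; 38; 32; 40; 34; 44; 37; 42; 45; 46; 47]; [:: 0; 8; 26; 6; 10; 5; 3; 7; 1; 12; 4; 14; 9; 13; 11; 15; 18; 17; 16; 21; 20; 19; 22; 23; 24; 32; 2; 30; 34; 29; 27; 31; 25; 36; 28; 38; 33; 37; 35; 39; 42; 41; 40; 45; 44; 43; 46; 47]; [:: 4; 25; 5; 3; 0; 2; 9; 7; 8; 6; 13; 11; 12; 10; 16; 15; 14; 19; 18; 17; 20; 22; 21; 23; 28; 1; 29; 27; 24; 26; 33; 31; 32; 30; 37; 35; 36; 34; 40; 39; 38; 43; 42; 41; 44; 46; 45; 47]; [:: 24; 4; 2; 3; 1; 7; 6; 5; 10; 11; 8; 9; 14; 13; 12; 17; 16; 15; 18; 19; 20; 21; 23; 22; 0; 28; 26; 27; 25; 31; 30; 29; 34; 35; 32; 33; 38; 37; 36; 41; 40; 39; 42; 43; 44; 45; 47; 46]].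
Definition uwl : seq (seq nat) := [:: [:: 3; 4]; [::]; [::]; [:: 2; 1]; [:: 4]; [:: 3]; [:: 1]; [:: 4; 3]; [:: 2]; [:: 3; 1]; [:: 4; 2]; [:: 4; 3; 1]; [:: 2; 3; 1]; [:: 3; 4; 2]; [:: 4; 2; 3; 1]; [:: 1; 2]; [:: 3; 4; 2; 3; 1]; [:: 4; 1; 2]; [:: 2; 3; 4; 2; 3; 1]; [:: 3; 4; 1; 2]; [:: 1; 2; 3; 4; 2; 3; 1]; [:: 2; 3; 4; 1; 2]; [:: 3; 2; 3; 4; 1; 2]; [:: 4; 3; 2; 3; 4; 1; 2]].
Definition ikl : seq nat := [:: 3; 3; 2; 2; 3; 2; 2; 2; 3; 2; 3; 2; 2; 3; 2; 3; 2; 3; 2; 3; 2; 3; 3; 3].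
Definition bidxl : seq nat := [:: 0; 3; 2; 1; 0].
Definition certBl : seq (seq (seq step)) := [:: [::];
 [:: [:: (0,19,false); (1,25,false); (5,19,true); (4,25,true); (2,20,false); (3,0,true)]; [:: (0,20,false); (1,0,true)]; [::]; [:: (0,37,false); (4,37,false); (2,4,true); (2,5,true)]; [:: (0,25,false); (3,25,true); (1,20,false); (2,0,true)]; [:: (0,19,false); (3,19,true)]; [:: (0,0,true); (1,0,true)]; [:: (0,25,false); (1,19,false); (5,25,true); (4,19,true)]; [::]; [:: (1,19,true); (0,0,true); (3,19,true); (2,0,true)]; [:: (1,31,true); (1,31,false); (0,25,false); (5,25,true)]; [:: (2,19,true); (1,25,true); (0,0,true); (5,25,true); (4,19,true); (3,0,true)]; [:: (2,19,true); (0,37,false); (1,6,false); (2,16,false); (7,19,false); (8,37,false); (9,6,false); (10,16,false); (5,47,false); (4,3,true); (3,6,true); (3,52,true); (4,6,true)]; [:: (2,31,true); (0,19,false); (2,31,false); (1,25,false); (7,19,true); (6,25,true)]; [:: (3,19,true); (1,31,true); (2,25,true); (2,25,false); (1,31,false); (0,25,false); (1,37,false); (2,6,false); (3,16,false); (11,25,true); (8,19,false); (9,37,false); (10,6,false); (11,16,false); (6,47,false); (5,3,true); (4,6,true); (4,52,true); (5,6,true)]; [:: (0,0,true); (3,0,true)]; [:: (4,19,true); (2,31,true); (3,25,true); (0,19,false); (3,25,false); (2,31,false); (1,25,false); (2,37,false); (3,6,false); (4,16,false); (13,19,true); (12,25,true); (9,19,false); (10,37,false); (11,6,false); (12,16,false);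 (7,47,false); (6,3,true); (5,6,true); (5,52,true); (6,6,true)]; [:: (1,25,true); (2,31,true); (0,0,true); (0,31,false); (5,25,true); (4,0,true)]; [:: (5,19,true); (3,31,true); (4,25,true); (4,25,false); (3,31,false); (5,19,false)]; [:: (2,25,true); (3,31,true); (1,19,true); (0,0,true); (1,31,false); (7,19,true); (6,25,true); (5,0,true)]; [:: (6,19,true); (4,31,true); (5,25,true); (0,0,true); (3,25,false); (2,31,false); (4,19,false); (13,0,true)]; [:: (3,25,true); (4,31,true); (2,19,true); (0,37,false); (1,6,false); (2,16,false); (3,46,false); (2,9,false); (3,22,false); (4,28,false); (12,25,false); (11,31,false); (13,19,false); (14,37,false); (12,6,false); (13,46,false); (16,16,false); (15,9,false); (16,28,false); (17,22,false); (10,9,false); (13,9,false); (11,45,true); (9,9,true); (8,6,true); (10,9,true); (9,6,true); (7,32,false); (8,3,true); (6,45,false); (8,9,true); (5,9,true)]; [:: (4,25,true); (5,31,true); (3,19,true); (0,19,false); (1,37,false); (2,6,false); (3,16,false); (4,46,false); (3,9,false); (4,22,false); (5,28,false); (17,19,true); (13,25,false); (12,31,false); (14,19,false); (15,37,false); (13,6,false); (14,46,false); (17,16,false); (16,9,false); (17,28,false); (18,22,false); (11,9,false); (14,9,false); (12,45,true); (10,9,true); (9,6,true); (11,9,true); (10,6,true); (8,32,false); (9,3,true); (7,45,false); (9,9,true); (6,9,true)]; [:: (5,25,true); (6,31,true); (4,19,true); (0,25,false); (1,19,false); (2,37,false); (3,6,false); (4,16,false); (5,46,false); (4,9,false); (5,22,false);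 (6,28,false); (19,25,true); (18,19,true); (14,25,false); (13,31,false); (15,19,false); (16,37,false); (14,6,false); (15,46,false); (18,16,false); (17,9,false); (18,28,false); (19,22,false); (12,9,false); (15,9,false); (13,45,true); (11,9,true); (10,6,true); (12,9,true); (11,6,true); (9,32,false); (10,3,true); (8,45,false); (10,9,true); (7,9,true)]];
 [:: [:: (0,6,false); (1,9,false); (11,6,false); (12,9,false); (7,9,false); (10,9,false); (8,45,true); (6,9,true); (5,6,true); (7,9,true); (6,6,true); (4,32,false); (5,3,true); (3,45,false); (5,9,true); (2,9,true)]; [::]; [:: (0,4,true); (0,5,true)]; [:: (0,3,true); (3,3,true)]; [:: (0,31,false); (3,31,true)]; [:: (0,6,false); (7,6,false); (3,47,false); (2,3,true); (1,6,true); (1,52,true); (2,6,true)]; [::]; [:: (0,31,false); (1,6,false); (7,31,true); (8,6,false); (4,47,false); (3,3,true); (2,6,true); (2,52,true); (3,6,true)]; [:: (0,3,true); (1,3,true)]; [:: (1,19,true); (1,19,false)]; [:: (1,31,true); (0,3,true); (3,31,true); (2,3,true)]; [:: (2,19,true); (1,25,true); (1,25,false); (0,31,false); (2,19,false); (7,31,true)]; [:: (2,19,true); (0,3,true); (0,19,false); (5,3,true)]; [:: (2,31,true); (0,6,false); (1,46,false); (1,9,false); (2,28,false); (9,31,false); (10,6,false); (11,46,false); (13,9,false); (14,28,false); (8,9,false); (11,9,false); (9,45,true); (7,9,true); (6,6,true); (8,9,true); (7,6,true); (5,32,false); (6,3,true); (4,45,false); (6,9,true); (3,9,true)]; [:: (3,19,true);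 (1,31,true); (2,25,true); (0,3,true); (0,25,false); (1,19,false); (7,31,true); (6,3,true)]; [:: (0,37,true); (4,37,true); (2,20,false); (3,0,true)]; [:: (4,19,true); (2,31,true); (3,25,true); (3,25,false); (2,31,false); (4,19,false)]; [:: (1,25,true); (2,31,true); (0,37,true); (2,25,false); (1,31,false); (0,25,false); (7,31,true); (5,37,true); (3,20,false); (4,0,true)]; [:: (5,19,true); (3,31,true); (4,25,true); (0,3,true); (2,25,false); (1,31,false); (3,19,false); (11,3,true)]; [:: (2,25,true); (3,31,true); (1,19,true); (1,19,false); (3,31,false); (2,25,false)]; [:: (6,19,true); (4,31,true); (5,25,true); (0,37,true); (2,19,false); (5,25,false); (4,31,false); (3,25,false); (4,37,false); (5,6,false); (6,16,false); (16,37,true); (15,19,true); (14,25,true); (11,19,false); (12,37,false); (13,6,false); (14,16,false); (9,47,false); (8,3,true); (7,6,true); (7,52,true); (8,6,true)]; [:: (3,25,true); (4,31,true); (2,19,true); (0,3,true); (0,19,false); (2,31,false); (1,25,false); (9,3,true)]; [:: (4,25,true); (5,31,true); (3,19,true); (3,19,false); (0,46,true); (3,34,false); (2,16,false); (2,19,false); (5,25,false); (4,31,false); (3,25,false); (11,46,false); (10,31,true); (8,37,true); (6,20,false); (7,0,true)]; [:: (5,25,true); (6,31,true); (4,19,true); (0,31,false); (4,19,false); (1,46,true); (4,34,false); (3,16,false); (3,19,false); (6,25,false); (5,31,false); (4,25,false); (15,31,true); (12,46,false); (11,31,true); (9,37,true); (7,20,false); (8,0,true)]];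
 [:: [:: (0,6,true); (3,6,true)]; [:: (0,7,true); (0,8,true)]; [::]; [:: (0,3,false); (1,0,false); (11,3,false); (12,0,false); (7,0,false); (10,0,false); (8,36,true); (6,0,true); (5,3,true); (7,0,true); (6,3,true); (4,17,false); (5,6,true); (3,36,false); (5,0,true); (2,0,true)]; [::]; [:: (0,6,true); (1,6,true)]; [:: (0,19,true); (0,19,false)]; [:: (0,43,false); (4,43,false); (2,29,false); (3,9,true)]; [:: (0,3,false); (7,3,false); (1,49,true); (4,3,true); (3,6,true); (2,3,true)]; [:: (1,19,true); (1,16,true); (0,6,true); (3,6,true)]; [:: (1,31,true); (1,31,false)]; [:: (2,19,true); (1,25,true); (0,19,true); (1,43,false); (0,25,false); (1,19,false); (6,43,false); (5,25,false); (3,29,false); (4,9,true)]; [:: (2,19,true); (0,3,false); (4,19,false); (1,46,true); (2,0,false); (10,3,false); (11,46,true); (13,0,false); (8,0,false); (11,0,false); (9,36,true); (7,0,true); (6,3,true); (8,0,true); (7,3,true); (5,17,false); (6,6,true); (4,36,false); (6,0,true); (3,0,true)]; [:: (2,31,true); (0,6,true); (0,31,false); (5,6,true)]; [:: (3,19,true); (1,31,true); (2,25,true); (2,25,false); (1,31,false); (3,19,false)]; [:: (0,19,true); (1,3,false); (7,19,false); (8,3,false); (2,49,true); (5,3,true); (4,6,true); (3,3,true)]; [:: (4,19,true); (2,31,true); (3,25,true); (0,6,true); (1,25,false); (0,31,false); (2,19,false); (9,6,true)]; [:: (1,25,true); (2,31,true); (0,19,true); (0,19,false); (2,31,false); (1,25,false)];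 [:: (5,19,true); (3,31,true); (4,25,true); (0,46,false); (3,19,true); (4,43,false); (3,25,false); (2,31,false); (4,19,false); (10,31,false); (11,46,true); (9,43,false); (11,28,false); (8,25,false); (6,29,false); (7,9,true)]; [:: (2,25,true); (3,31,true); (1,19,true); (1,16,true); (0,6,true); (1,31,false); (0,25,false); (7,6,true)]; [:: (6,19,true); (4,31,true); (5,25,true); (0,19,true); (1,46,false); (4,19,true); (5,43,false); (4,25,false); (3,31,false); (5,19,false); (15,19,false); (11,31,false); (12,46,true); (10,43,false); (12,28,false); (9,25,false); (7,29,false); (8,9,true)]; [:: (3,25,true); (4,31,true); (2,19,true); (2,19,false); (4,31,false); (3,25,false)]; [:: (4,25,true); (5,31,true); (3,19,true); (0,6,true); (1,19,false); (3,31,false); (2,25,false); (11,6,true)]; [:: (5,25,true); (6,31,true); (4,19,true); (6,31,false); (0,43,false); (2,28,false); (3,22,false); (4,40,false); (3,19,false); (4,25,false); (6,3,false); (16,40,true); (15,28,true); (13,43,true); (12,19,false); (13,3,false); (7,49,true); (10,3,true); (9,6,true); (8,3,true)]];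
 [:: [:: (0,43,true); (4,43,true); (2,7,true); (2,8,true)]; [::]; [:: (0,29,false); (1,9,true)]; [:: (0,31,true); (1,25,true); (5,31,false); (4,25,false); (2,29,false); (3,9,true)]; [:: (0,9,true); (1,9,true)]; [::]; [:: (0,25,true); (3,25,false); (1,29,false); (2,9,true)]; [:: (0,9,true); (3,9,true)]; [:: (0,31,true); (0,31,false)]; [:: (1,19,true); (0,25,true); (0,25,false); (1,19,false)]; [:: (1,31,true); (1,28,true); (0,9,true); (3,9,true)]; [:: (2,19,true); (1,25,true); (1,22,true); (0,9,true); (0,19,false); (5,9,true)]; [:: (2,19,true); (0,31,true); (1,25,true); (1,25,false); (0,31,false); (2,19,false)]; [:: (2,31,true); (2,28,true); (0,43,true); (2,3,false); (8,43,true); (9,3,false); (3,49,true); (6,3,true); (5,6,true); (4,3,true)]; [:: (3,19,true); (1,31,true); (2,25,true); (2,22,true); (1,28,true); (0,9,true); (1,19,false); (7,9,true)]; [:: (0,25,true); (1,31,true); (1,31,false); (0,25,false)]; [:: (4,19,true); (2,31,true); (3,25,true); (3,22,true); (2,28,true); (0,43,true); (2,3,false); (6,19,false); (3,46,true); (4,0,false); (14,43,true); (12,3,false); (13,46,true); (15,0,false); (10,0,false); (13,0,false); (11,36,true); (9,0,true); (8,3,true); (10,0,true); (9,3,true); (7,17,false); (8,6,true); (6,36,false); (8,0,true); (5,0,true)]; [:: (1,25,true); (2,31,true); (2,28,true); (1,22,true); (0,9,true); (5,9,true)]; [:: (5,19,true); (3,31,true); (4,25,true); (0,31,true); (4,22,true);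 (3,28,true); (1,43,true); (3,3,false); (7,19,false); (4,46,true); (5,0,false); (17,28,true); (15,43,true); (13,3,false); (14,46,true); (16,0,false); (11,0,false); (14,0,false); (12,36,true); (10,0,true); (9,3,true); (11,0,true); (10,3,true); (8,17,false); (9,6,true); (7,36,false); (9,0,true); (6,0,true)]; [:: (2,25,true); (3,31,true); (1,19,true); (0,25,true); (3,28,true); (1,43,true); (0,19,false); (1,25,false); (3,3,false); (10,43,true); (9,19,false); (10,3,false); (4,49,true); (7,3,true); (6,6,true); (5,3,true)]; [:: (6,19,true); (4,31,true); (5,25,true); (0,25,true); (1,31,true); (5,22,true); (4,28,true); (2,43,true); (4,3,false); (8,19,false); (5,46,true); (6,0,false); (19,22,true); (18,28,true); (16,43,true); (14,3,false); (15,46,true); (17,0,false); (12,0,false); (15,0,false); (13,36,true); (11,0,true); (10,3,true); (12,0,true); (11,3,true); (9,17,false); (10,6,true); (8,36,false); (10,0,true); (7,0,true)]; [:: (3,25,true); (4,31,true); (2,19,true); (0,31,true); (1,25,true); (4,28,true); (2,43,true); (1,19,false); (2,25,false); (4,3,false); (13,28,true); (11,43,true); (10,19,false); (11,3,false); (5,49,true); (8,3,true); (7,6,true); (6,3,true)]; [:: (4,25,true); (5,31,true); (3,19,true); (3,19,false); (5,31,false); (4,25,false)]; [:: (5,25,true); (6,31,true); (4,19,true); (0,9,true); (2,19,false); (4,31,false); (3,25,false); (13,9,true)]]].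
Definition certBasel : seq (seq step) := [:: [::]; [:: (2,0,false); (5,0,false); (3,36,true); (1,0,true); (0,3,true); (2,0,true); (1,3,true)]; [::]; [::]; [:: (2,9,false); (5,9,false); (3,45,true); (1,9,true); (0,6,true); (2,9,true); (1,6,true)]].
Definition basel : seq (nat * nat * seq step) := [:: (3,0,[:: (2,0,false); (5,0,false); (3,36,true); (1,0,true); (0,3,true); (2,0,true); (1,3,true); (3,9,false); (6,9,false); (4,45,true); (2,9,true); (1,6,true); (3,9,true); (2,6,true); (0,24,true); (1,6,false); (2,9,false); (0,6,false); (1,9,false); (3,45,false); (5,9,true); (2,9,true); (6,3,false); (7,0,false); (5,3,false); (6,0,false); (8,36,false); (10,0,true); (7,0,true)]); (1,8,[:: (0,3,false); (1,48,true); (1,12,false); (2,48,false); (0,48,true); (1,53,true); (2,12,true); (1,53,true); (0,48,false)])].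
Definition tl : seq (nat * nat * nat) := [:: (3,0,0); (1,8,0); (6,0,2); (3,4,3); (1,15,1); (4,10,4); (2,0,1); (9,4,3); (6,10,2); (3,1,4); (8,15,2); (4,17,4); (0,13,3); (5,4,3); (12,10,2); (11,1,4); (2,17,1); (9,13,3); (6,8,4); (10,17,4); (0,19,3); (5,10,2); (7,1,4); (12,17,1); (12,13,3); (14,8,4); (5,19,3); (2,15,4); (11,13,4); (9,8,3); (13,19,3); (0,21,2); (9,17,1); (2,13,3); (7,8,4); (12,19,3); (14,15,4); (14,13,4); (16,8,3); (5,21,2); (7,19,4); (5,15,3); (11,10,3); (12,1,2); (13,21,2); (4,22,3); (6,19,3); (11,15,4); (9,21,2); (14,19,4); (16,15,3); (16,10,3); (18,1,2); (2,22,3); (7,21,4); (7,17,3); (14,4,2); (19,21,1); (10,22,3); (1,23,4); (3,21,2); (6,22,3); (11,21,4); (16,17,3); (18,15,2); (18,4,2); (20,1,1); (2,23,4); (7,22,3); (16,0,3); (17,22,3); (8,23,4); (3,22,3); (6,23,4); (11,22,3); (18,17,2); (20,8,1); (20,4,1); (18,0,3); (5,23,3); (15,23,4); (3,23,4); (9,23,3); (14,22,2); (20,10,1); (18,19,3); (20,0,3); (12,23,2); (16,21,3); (20,13,3)].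
Definition witl : seq (nat * nat * (seq nat * nat) * (seq nat * nat)) := [:: (2,5,([::],5%N),([:: 4],3%N)); (2,7,([::],5%N),([:: 3; 4],2%N)); (2,20,([::],5%N),([:: 5; 6; 4; 5; 2; 4; 3],1%N)); (3,12,([::],6%N),([:: 5; 4; 3],1%N)); (3,14,([::],6%N),([:: 6; 5; 3; 4],2%N)); (3,16,([::],6%N),([:: 6; 4; 5; 3; 4],2%N)); (5,2,([:: 4],3%N),([::],5%N)); (5,7,([:: 4],3%N),([:: 3; 4],2%N)); (5,20,([:: 4],3%N),([:: 5; 6; 4; 5; 2; 4; 3],1%N)); (6,9,([:: 3],1%N),([:: 6; 5],4%N)); (6,11,([:: 3],1%N),([:: 6; 5; 4],2%N)); (6,18,([:: 3],1%N),([:: 3; 4; 5; 2; 4; 3],1%N)); (7,2,([:: 3; 4],2%N),([::],5%N)); (7,5,([:: 3; 4],2%N),([:: 4],3%N)); (7,20,([:: 3; 4],2%N),([:: 5; 6; 4; 5; 2; 4; 3],1%N)); (9,6,([:: 6; 5],4%N),([:: 3],1%N)); (9,11,([:: 6; 5],4%N),([:: 6; 5; 4],2%N)); (9,18,([:: 6; 5],4%N),([:: 3; 4; 5; 2; 4; 3],1%N)); (11,6,([:: 6; 5; 4],2%N),([:: 3],1%N)); (11,9,([:: 6; 5; 4],2%N),([:: 6; 5],4%N)); (11,18,([:: 6; 5; 4],2%N),([:: 3; 4; 5; 2; 4; 3],1%N)); (12,3,([:: 5; 4; 3],1%N),([::],6%N)); (12,14,([:: 5; 4; 3],1%N),([::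 6; 5; 3; 4],2%N)); (12,16,([:: 5; 4; 3],1%N),([:: 6; 4; 5; 3; 4],2%N)); (14,3,([:: 6; 5; 3; 4],2%N),([::],6%N)); (14,12,([:: 6; 5; 3; 4],2%N),([:: 5; 4; 3],1%N)); (14,16,([:: 6; 5; 3; 4],2%N),([:: 6; 4; 5; 3; 4],2%N)); (16,3,([:: 6; 4; 5; 3; 4],2%N),([::],6%N)); (16,12,([:: 6; 4; 5; 3; 4],2%N),([:: 5; 4; 3],1%N)); (16,14,([:: 6; 4; 5; 3; 4],2%N),([:: 6; 5; 3; 4],2%N)); (18,6,([:: 3; 4; 5; 2; 4; 3],1%N),([:: 3],1%N)); (18,9,([:: 3; 4; 5; 2; 4; 3],1%N),([:: 6; 5],4%N)); (18,11,([:: 3; 4; 5; 2; 4; 3],1%N),([:: 6; 5; 4],2%N)); (20,2,([:: 5; 6; 4; 5; 2; 4; 3],1%N),([::],5%N)); (20,5,([:: 5; 6; 4; 5; 2; 4; 3],1%N),([:: 4],3%N)); (20,7,([:: 5; 6; 4; 5; 2; 4; 3],1%N),([:: 3; 4],2%N))].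
Definition rdef : seq letter * seq letter * nat := ([::], [::], 0%N).

Definition apply_step (w : seq letter) (s : step) : option (seq letter * nat * bool) :=
  let: (p, n, fw) := s in
  let: (l, rr, d) := nth rdef rules n in
  let fr := if fw then l else rr in
  let to := if fw then rr else l in
  if take (size fr) (drop p w) == fr then Some (take p w ++ to ++ drop (size fr + p) w, d, fw)
  else None.

Fixpoint run (w : seq letter) (a b : nat) (st : seq step) : option (seq letter * nat * nat) :=
  match st with
  | [::] => Some (w, a, b)
  | s :: st' =>
      match apply_step w s with
      | Some (w', d, true) => run w' a (b + d) st'
      | Some (w', d, false) => run w' (a + d) b st'
      | None => None
      end
  end.

Definition certOK (src tgt : seq letter) (st : seq step) : bool :=
  if run src 0 0 st is Some (w, a, b) then (w == tgt) && (a == b) else false.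

Definition uw (k : nat) : seq nat := nth [::] uwl k.
Definition ik (k : nat) : nat := nth 0%N ikl k.
Definition rl (j : nat) : letter := (true, j).
Definition Ew (k : nat) : seq letter :=
  map rl (uw k) ++ (false, ik k) :: map rl (rev (uw k)).
Definition act (j k : nat) : nat := nth 0%N (nth [::] actl j) k.
Definition posof (k : nat) : nat := if (k < 24)%N then k else (k - 24)%N.
Definition bidx (i : nat) : nat := nth 0%N bidxl i.
Definition certB (j k : nat) : seq step := nth [::] (nth [::] certBl j) k.
Definition certBase (i : nat) : seq step := nth [::] certBasel i.

Local Open Scope ring_scope.

Definition mkv (a b c d : int) : vec4 :=
  V4 (a%:~R / 2%:R) (b%:~R / 2%:R) (c%:~R / 2%:R) (d%:~R / 2%:R).
Definition vecOf (k : nat) : vec4 :=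
  let: (a, b, c, d) := nth (0%Z, 0%Z, 0%Z, 0%Z) vecl k in mkv a b c d.
Definition v4eqb (u v : vec4) :=
  [&& c1 u == c1 v, c2 u == c2 v, c3 u == c3 v & c4 u == c4 v].

Definition checkB : bool :=
  all (fun j => all (fun k =>
     [&& v4eqb (refl4 (beta j) (vecOf k)) (vecOf (act j k)), (act j k < 48)%N &
      certOK (rl j :: Ew (posof k) ++ [:: rl j]) (Ew (posof (act j k))) (certB j (posof k))])
     (iota 0 48)) [:: 1; 2; 3; 4]%N.

Definition checkBase : bool :=
  all (fun i => [&& v4eqb (beta i) (vecOf (bidx i)), (bidx i < 24)%N &
     certOK (Ew (bidx i)) [:: (false, i)] (certBase i)]) [:: 1; 2; 3; 4]%N.

Definition hasbase (a b : nat) :=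
  has (fun x => [&& x.1.1 == a, x.1.2 == b & certOK (Ew a ++ Ew b) (Ew b ++ Ew a) x.2]) basel.
Arguments hasbase : simpl never.

Fixpoint check_tl (proven : seq (nat * nat)) (l : seq (nat * nat * nat)) : bool :=
  match l with
  | [::] => true
  | (a, b, j) :: t =>
     [&& (a < 24)%N, (b < 24)%N,
      (if j == 0%N then hasbase a b
       else [&& (1 <= j <= 4)%N & (posof (act j a), posof (act j b)) \in proven]) &
      check_tl ((a, b) :: proven) t]
  end.

Definition shorty (k : nat) := dot4 (vecOf k) (vecOf k) == 1.
Definition intl (k1 k2 : nat) := has (fun t => ((t.1.1 == k1) && (t.1.2 == k2)) || ((t.1.1 == k2) && (t.1.2 == k1))) tl.

Definition chain (l : seq nat) (k : nat) : vec6 := foldr (fun i v => refl6 (alpha i) v) (alpha k) l.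
Definition v6eqb (u v : vec6) :=
  [&& d1 u == d1 v, d2 u == d2 v, d3 u == d3 v, d4 u == d4 v, d5 u == d5 v & d6 u == d6 v].
Definition nonneg6 (v : vec6) :=
  [&& 0 <= d1 v, 0 <= d2 v, 0 <= d3 v, 0 <= d4 v, 0 <= d5 v & 0 <= d6 v].
Definition okchain (c : seq nat * nat) :=
  all (fun i => (1 <= i <= 6)%N) c.1 && (1 <= c.2 <= 6)%N && nonneg6 (chain c.1 c.2).
Definition witOK (k1 k2 : nat) :=
  has (fun t => let: (a, b, x, y) := t in
      [&& a == k1, b == k2, okchain x, okchain y,
       v4eqb (projE6F4 (chain x.1 x.2)) (vecOf k1),
       v4eqb (projE6F4 (chain y.1 y.2)) (vecOf k2),
       dot6 (chain x.1 x.2) (chain y.1 y.2) != 0 &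
       ~~ v6eqb (chain x.1 x.2) (chain y.1 y.2)]) witl.

Definition rho := V4 10 1 2 3.

Definition checkCover : bool :=
  all (fun k1 => all (fun k2 =>
     (dot4 (vecOf k1) (vecOf k2) == 0) ==>
       (if shorty k1 && shorty k2 then witOK k1 k2 else intl k1 k2))
     (iota 0 24)) (iota 0 24) && all (fun k => dot4 rho (vecOf k) < 0) (iota 24 24).

Lemma checkB_ok : checkB. Proof. vm_compute. reflexivity. Qed.
Lemma checkBase_ok : checkBase. Proof. vm_compute. reflexivity. Qed.
Lemma check_tl_ok : check_tl [::] tl. Proof. vm_compute. reflexivity. Qed.
Lemma checkCover_ok : checkCover. Proof. vm_compute. reflexivity. Qed.


Definition evw (R : pzRingType) (r e : nat -> R) (w : seq letter) : R :=
  \prod_(l <- w) (if l.1 then r l.2 else e l.2).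

Lemma evw_cat (R : pzRingType) (r e : nat -> R) u v : evw r e (u ++ v) = evw r e u * evw r e v.
Proof. by rewrite /evw big_cat. Qed.

Lemma evw_cons (R : pzRingType) (r e : nat -> R) x v :
  evw r e (x :: v) = (if x.1 then r x.2 else e x.2) * evw r e v.
Proof. by rewrite /evw big_cons. Qed.

Lemma rules_hold (R : pzRingType) (delta : R) (r e : nat -> R) (hrels : BrF4_rels delta r e) n :
  let: (l, rr, d) := nth rdef rules n in evw r e l = delta ^+ d * evw r e rr.
Proof.
case: hrels => H1 [H3 [H4 [H5 [H6 [Hc [Hb [Ha1 [Ha2 [Ha3 [Ha4 [Ha5 [Ha6 [Ha7 Ha8]]]]]]]]]]]]].
rewrite !mulrA in Ha4.
have [h11 [h12 h13]] := H1 1%N isT. have [h21 [h22 h23]] := H1 2%N isT.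
have [h31 [h32 h33]] := H1 3%N isT. have [h41 [h42 h43]] := H1 4%N isT.
have [c131 [c132 c133]] := Hc 1%N 3%N isT. have [c311 [c312 c313]] := Hc 3%N 1%N isT.
have [c141 [c142 c143]] := Hc 1%N 4%N isT. have [c411 [c412 c413]] := Hc 4%N 1%N isT.
have [c241 [c242 c243]] := Hc 2%N 4%N isT. have [c421 [c422 c423]] := Hc 4%N 2%N isT.
have [b121 [b122 b123]] := Hb 1%N 2%N isT. have [b211 [b212 b213]] := Hb 2%N 1%N isT.
have [b341 [b342 b343]] := Hb 3%N 4%N isT. have [b431 [b432 b433]] := Hb 4%N 3%N isT.
do 54 (case: n => [|n]; [rewrite /= /evw ?big_cons ?big_nil /= ?expr0 ?expr1 ?mul1r ?mulr1 ?mulrA; assumption|]).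
by rewrite nth_default //= /evw !big_nil expr0 mulr1.
Qed.

Lemma commX (R : pzRingType) (delta : R) (hcentral : forall x : R, delta * x = x * delta) n x :
  delta ^+ n * x = x * delta ^+ n.
Proof. by elim: n => [|n IH]; rewrite ?expr0 ?mul1r ?mulr1 // exprS -mulrA IH mulrA hcentral mulrA. Qed.

Lemma apply_ok (R : pzRingType) (delta : R) (r e : nat -> R) (hrels : BrF4_rels delta r e)
  (hcentral : forall x : R, delta * x = x * delta) w s w' d fw :
  apply_step w s = Some (w', d, fw) ->
  if fw then evw r e w = delta ^+ d * evw r e w' else evw r e w' = delta ^+ d * evw r e w.
Proof.
case: s => [[p n] fw0]; rewrite /apply_step.
have := rules_hold hrels n.
case: (nth rdef rules n) => [[l rr] d0] H.
case: ifP => // /eqP Ht [<- <- <-].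
have Ew0 : w = take p w ++ (if fw0 then l else rr) ++ drop (size (if fw0 then l else rr) + p) w.
  by rewrite -{1}Ht -drop_drop !cat_take_drop.
case: fw0 Ew0 Ht => /= Ew0 _.
  by rewrite {1}Ew0 !evw_cat H !mulrA -[_ * delta ^+ _]commX.
by rewrite [in RHS]Ew0 !evw_cat H !mulrA -[_ * delta ^+ _]commX.
Qed.

Lemma run_ok (R : pzRingType) (delta : R) (r e : nat -> R) (hrels : BrF4_rels delta r e)
  (hcentral : forall x : R, delta * x = x * delta) w0 st : forall w a b w' a' b',
  run w a b st = Some (w', a', b') ->
  delta ^+ a * evw r e w0 = delta ^+ b * evw r e w ->
  delta ^+ a' * evw r e w0 = delta ^+ b' * evw r e w'.
Proof.
elim: st => [|s st IH] w a b w' a' b' /=; first by case=> <- <- <-.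
case E: (apply_step w s) => [[[w1 d] fw]|] //.
have := apply_ok hrels hcentral E.
case: fw E => E H.
  move=> /IH Hr Hi; apply: Hr; by rewrite Hi H mulrA -exprD addnC.
move=> /IH Hr Hi; apply: Hr.
by rewrite addnC exprD -mulrA Hi mulrA -commX // -mulrA H.
Qed.

Lemma certOK_ok (R : pzRingType) (delta : R) (r e : nat -> R)
  (hunit : exists dinv : R, delta * dinv = 1 /\ dinv * delta = 1)
  (hcentral : forall x : R, delta * x = x * delta)
  (hrels : BrF4_rels delta r e) src tgt st :
  certOK src tgt st -> evw r e src = evw r e tgt.
Proof.
rewrite /certOK.
case E: (run src 0 0 st) => [[[w a] b]|] // /andP [/eqP Hw /eqP Hab].
have := run_ok (w0 := src) hrels hcentral E; rewrite !expr0 !mul1r => /(_ erefl).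
rewrite Hab -Hw => H.
case: hunit => dinv [h1 h2].
have Hi : forall n, dinv ^+ n * delta ^+ n = 1.
  elim=> [|n IHn]; first by rewrite !expr0 mulr1.
  by rewrite exprS exprSr mulrA -(mulrA dinv) IHn mulr1 h2.
by rewrite -[evw r e src]mul1r -(Hi b) -mulrA H mulrA Hi mul1r.
Qed.

Definition Ep (R : pzRingType) (r e : nat -> R) (k : nat) : R := evw r e (Ew k).

Lemma v4eqbP u v : v4eqb u v -> u = v.
Proof. by case: u => ? ? ? ?; case: v => ? ? ? ? /and4P [/= /eqP -> /eqP -> /eqP -> /eqP ->]. Qed.

Lemma v6eqb_refl u : v6eqb u u.
Proof. by rewrite /v6eqb !eqxx. Qed.

Lemma mem4 j : (1 <= j <= 4)%N -> j \in [:: 1; 2; 3; 4]%N.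
Proof. by case: j => [|[|[|[|[|j]]]]]. Qed.

Lemma evw_conj (R : pzRingType) (r e : nat -> R) j w :
  evw r e (rl j :: w ++ [:: rl j]) = r j * evw r e w * r j.
Proof. by rewrite evw_cons evw_cat evw_cons /evw big_nil mulr1 mulrA. Qed.

Lemma lemB (R : pzRingType) (delta : R) (r e : nat -> R)
  (hunit : exists dinv : R, delta * dinv = 1 /\ dinv * delta = 1)
  (hcentral : forall x : R, delta * x = x * delta)
  (hrels : BrF4_rels delta r e) j k :
  (1 <= j <= 4)%N -> (k < 48)%N ->
  [/\ refl4 (beta j) (vecOf k) = vecOf (act j k), (act j k < 48)%N &
      r j * Ep r e (posof k) * r j = Ep r e (posof (act j k))].
Proof.
move=> Hj Hk.
have := checkB_ok; move/allP/(_ j (mem4 Hj))/allP.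
have Hk' : k \in iota 0 48 by rewrite mem_iota.
move/(_ k Hk')/and3P => [Hv Ha Hc].
split => //; first exact: v4eqbP.
by rewrite /Ep -evw_conj (certOK_ok hunit hcentral hrels Hc).
Qed.

Lemma ind (R : pzRingType) (delta : R) (r e : nat -> R)
  (hunit : exists dinv : R, delta * dinv = 1 /\ dinv * delta = 1)
  (hcentral : forall x : R, delta * x = x * delta)
  (hrels : BrF4_rels delta r e) w i :
  valid_word w -> (1 <= i <= 4)%N ->
  exists k, [/\ (k < 48)%N, actW w (beta i) = vecOf k & eRoot r e w i = Ep r e (posof k)].
Proof.
move=> + Hi; elim: w => [|j w IH].
  move=> _; have := checkBase_ok; move/allP/(_ i (mem4 Hi))/and3P => [Hv Hb Hc].
  exists (bidx i); split.
  - exact: ltn_trans Hb _.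
  - exact: v4eqbP.
  rewrite /posof Hb /Ep (certOK_ok hunit hcentral hrels Hc) /eRoot /wordR /=.
  by rewrite /evw !big_nil big_cons big_nil /= mul1r !mulr1.
rewrite /valid_word /= => /andP [Hj Hw].
have [k [Hk Hv He]] := IH Hw.
have [Hv' Ha Hc] := lemB hunit hcentral hrels Hj Hk.
exists (act j k); split => //.
  by rewrite /actW /= -/(actW w (beta i)) Hv.
rewrite -Hc -He /eRoot /wordR rev_cons -cats1 big_cat big_cons /= big_seq1.
by rewrite !mulrA.
Qed.

Lemma conjE (R : pzRingType) (delta : R) (r e : nat -> R)
  (hunit : exists dinv : R, delta * dinv = 1 /\ dinv * delta = 1)
  (hcentral : forall x : R, delta * x = x * delta)
  (hrels : BrF4_rels delta r e) j a :
  (1 <= j <= 4)%N -> (a < 24)%N ->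
  Ep r e a = r j * Ep r e (posof (act j a)) * r j.
Proof.
move=> Hj Ha.
have [_ _ Hc] := lemB hunit hcentral hrels Hj (ltn_trans Ha (isT : (24 < 48)%N)).
have [hjj _] := (hrels.1 j Hj).
by rewrite -Hc /posof Ha !mulrA hjj mul1r -mulrA hjj mulr1.
Qed.

Lemma tl_sound (R : pzRingType) (delta : R) (r e : nat -> R)
  (hunit : exists dinv : R, delta * dinv = 1 /\ dinv * delta = 1)
  (hcentral : forall x : R, delta * x = x * delta)
  (hrels : BrF4_rels delta r e) l : forall proven,
  (forall a b, (a, b) \in proven -> Ep r e a * Ep r e b = Ep r e b * Ep r e a) ->
  check_tl proven l ->
  forall a b j, (a, b, j) \in l -> Ep r e a * Ep r e b = Ep r e b * Ep r e a.
Proof.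
elim: l => [|[[a b] j] l IH] proven Hp //=.
case/and4P => Ha Hb Hj Ht.
have Hab : Ep r e a * Ep r e b = Ep r e b * Ep r e a.
  move: Hj; case: ifP => [_|_ /andP [Hj Hin]].
    rewrite /hasbase; case/hasP => [[[x y] c] _ /and3P [/eqP Hx /eqP Hy Hc]].
    have := certOK_ok hunit hcentral hrels Hc.
    by rewrite /Ep !evw_cat => ->.
  rewrite (conjE hunit hcentral hrels Hj Ha) (conjE hunit hcentral hrels Hj Hb).
  have [hjj _] := (hrels.1 j Hj).
  rewrite !mulrA -(mulrA _ (r j) (r j)) hjj mulr1 -(mulrA _ (r j) (r j)) hjj mulr1.
  by rewrite -(mulrA (r j)) (Hp _ _ Hin) mulrA.
move=> a' b' j'; rewrite inE => /orP [/eqP [-> -> _] //|].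
apply: (IH ((a, b) :: proven)) => // x y; rewrite inE => /orP [/eqP [-> ->] //|].
exact: Hp.
Qed.

Lemma chain_root l k : all (fun i => (1 <= i <= 6)%N) l -> (1 <= k <= 6)%N -> rootE6 (chain l k).
Proof.
move=> + Hk; elim: l => [|i l IH] /=; first by move=> _; apply: rootE6_simple.
by case/andP => Hi Hl; apply: rootE6_refl => //; apply: IH.
Qed.

Lemma okchain_pos c : okchain c -> posRootE6 (chain c.1 c.2).
Proof.
case/andP => /andP [Hl Hk] Hn; split; first exact: chain_root.
by move: Hn; rewrite /nonneg6 => /and5P [? ? ? ? /andP [? ?]].
Qed.

Lemma wit_false (X : vec4 -> Prop) (hX : admissibleF4 X) k1 k2 :
  witOK k1 k2 -> X (vecOf k1) -> X (vecOf k2) -> False.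
Proof.
case: hX => _ [_ [_ [hortho _]]].
case/hasP => [[[[a b] x] y] _].
case/andP => _ /andP [_ /andP [Hx /andP [Hy /andP [Px /andP [Py /andP [Hd Hne]]]]]].
move=> X1 X2.
have Bx : posRootE6 (chain x.1 x.2) /\ X (projE6F4 (chain x.1 x.2)).
  by split; [exact: okchain_pos | rewrite (v4eqbP Px)].
have By : posRootE6 (chain y.1 y.2) /\ X (projE6F4 (chain y.1 y.2)).
  by split; [exact: okchain_pos | rewrite (v4eqbP Py)].
have Hneq : chain x.1 x.2 <> chain y.1 y.2.
  by move=> E; move: Hne; rewrite E v6eqb_refl.
by move: Hd; rewrite (hortho _ _ Bx By Hneq) eqxx.
Qed.

Lemma pos_rho v : posRootF4 v -> 0 <= dot4 rho v.
Proof.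
case=> _ [a1 [a2 [a3 [a4 [h1 [h2 [h3 [h4 ->]]]]]]]].
rewrite /dot4 /rho /add4 /scale4 /beta /=.
lra.
Qed.

Lemma idx_pos k v : (k < 48)%N -> posRootF4 v -> v = vecOf k -> (k < 24)%N.
Proof.
move=> Hk Hv Ev; case: (ltnP k 24) => // Hk24.
have := checkCover_ok; case/andP => _ /allP /(_ k).
rewrite mem_iota Hk24 /= => /(_ Hk).
by rewrite -Ev ltNge (pos_rho Hv).
Qed.

Unset Implicit Arguments.

Theorem lemma3p4 (R : pzRingType) (delta : R) (r e : nat -> R)
  (hunit : exists dinv : R, delta * dinv = 1 /\ dinv * delta = 1)
  (hcentral : forall x : R, delta * x = x * delta)
  (hrels : BrF4_rels delta r e)
  (g1 g2 : vec4)
  (hg1 : posRootF4 g1) (hg2 : posRootF4 g2) (horth : dot4 g1 g2 = 0)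
  (hadm : exists X : vec4 -> Prop, admissibleF4 X /\ X g1 /\ X g2)
  (w1 w2 : seq nat) (i1 i2 : nat)
  (hw1 : valid_word w1) (hw2 : valid_word w2)
  (hi1 : (1 <= i1 <= 4)%N) (hi2 : (1 <= i2 <= 4)%N)
  (h1 : actW w1 (beta i1) = g1) (h2 : actW w2 (beta i2) = g2) :
  eRoot r e w1 i1 * eRoot r e w2 i2 = eRoot r e w2 i2 * eRoot r e w1 i1.
Proof.
have [k1 [Hk1 Hv1 He1]] := ind hunit hcentral hrels hw1 hi1.
have [k2 [Hk2 Hv2 He2]] := ind hunit hcentral hrels hw2 hi2.
have G1 : g1 = vecOf k1 by rewrite -h1.
have G2 : g2 = vecOf k2 by rewrite -h2.
have P1 := idx_pos Hk1 hg1 G1.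
have P2 := idx_pos Hk2 hg2 G2.
rewrite He1 He2 /posof P1 P2.
have := checkCover_ok; case/andP => C1 _.
have K1 : k1 \in iota 0 24 by rewrite mem_iota.
have K2 : k2 \in iota 0 24 by rewrite mem_iota.
move/allP: C1 => /(_ k1 K1) /allP /(_ k2 K2).
rewrite -G1 -G2 horth eqxx /=.
case: ifP => _.
  case: hadm => X [hX [X1 X2]] /(wit_false hX).
  by rewrite -G1 -G2 => /(_ X1 X2).
case/hasP => [[[a b] j] Hin /orP [/andP [/eqP Ha /eqP Hb]|/andP [/eqP Ha /eqP Hb]]];
  rewrite /= in Ha Hb; subst a b.
  exact: (tl_sound hunit hcentral hrels (proven := [::]) _ check_tl_ok Hin).
symmetry; exact: (tl_sound hunit hcentral hrels (proven := [::]) _ check_tl_ok Hin).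
Qed.
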